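(* Let $T$ be a text of length $n$ with suffix tree $\mathcal T$, and let $d=\lceil\log_2 n\rceil$. The total number of unique Weiner links in $\mathcal T$ is $O(n/d)$.
   Context: For a node $v$ of the suffix tree $\mathcal T$ whose root-to-node path spells $p$, and a symbol $c$ such that $cp$ occurs in $T$, the Weiner link $\mathrm{wlink}(v,c)$ goes from $v$ (its source) to the locus $u$ of $cp$ in $\mathcal T$. A Weiner link is heavy if its target node has at least $d$ leaf descendants, and light otherwise. A Weiner link $\mathrm{wlink}(v,c)$ is unique if $v$ is the source of at least $d+1$ Weiner links and $\mathrm{wlink}(v,c)$ is the only heavy Weiner link with source $v$. *)

(* Defs.v *)
From mathcomp Require Import all_boot.
Set Implicit Arguments. Unset Strict Implicit. Unset Printing Implicit Defensive.

(* Suffix tree of a text t (a sequence over an alphabet A : eqType), with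
   nodes identified with the strings spelled on their root-to-node paths:
   - the root (empty string),
   - internal branching nodes = right-maximal substrings,
   - leaves = the nonempty suffixes of t.
   (t is assumed to end with a unique terminator in the main statement, so
   that every nonempty suffix is a leaf.) *)
Section SuffixTree.
Variable A : eqType.
Implicit Types (t p q u v : seq A) (c : A).

Definition substrs t : seq (seq A) :=
  undup [seq take j (drop i t) | i <- iota 0 (size t).+1, j <- iota 0 (size t).+1].

Definition right_maximal t p : bool :=
  has (fun a => has (fun b => (a != b) && infix (rcons p a) t && infix (rcons p b) t)
                    (undup t)) (undup t).

Definition leaves t : seq (seq A) := [seq drop i t | i <- iota 0 (size t)].

Definition is_node t p : bool :=
  (p == [::]) || right_maximal t p || (p \in leaves t).

Definition leaf_desc t p : nat := count (fun w => prefix p w) (leaves t).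

(* the locus of q: the shallowest node whose path label has q as a prefix *)
Definition locus t q : seq A :=
  head q (sort (fun x y => size x <= size y)
               [seq u <- substrs t | is_node t u & prefix q u]).

Definition is_wlink t v c : bool := is_node t v && infix (c :: v) t.

Definition n_wlinks t v : nat := count (fun c => is_wlink t v c) (undup t).

Definition heavy_wlink t (d : nat) v c : bool :=
  is_wlink t v c && (d <= leaf_desc t (locus t (c :: v))).

Definition unique_wlink t (d : nat) v c : bool :=
  [&& is_wlink t v c, d.+1 <= n_wlinks t v, heavy_wlink t d v c &
      all (fun c' => heavy_wlink t d v c' ==> (c' == c)) (undup t)].

Definition num_unique_wlinks t (d : nat) : nat :=
  count (fun vc : seq A * A => unique_wlink t d vc.1 vc.2)
        [seq (v, c) | v <- substrs t, c <- undup t].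

End SuffixTree.

Definition has_terminator (A : eqType) (t : seq A) : Prop :=
  exists (s : seq A) (dollar : A), t = rcons s dollar /\ dollar \notin s.

(* Main.v *)
Require Import Defs.
From mathcomp Require Import all_boot.
From mathcomp Require Import zify.

Set Implicit Arguments. Unset Strict Implicit. Unset Printing Implicit Defensive.

Section Aux.
Variable A : eqType.
Implicit Types (t s u v : seq A) (S : seq A) (U : seq (seq A)).

Lemma count_le1 (T : eqType) (P : pred T) (s : seq T) :
  uniq s -> {in s &, forall x y, P x -> P y -> x = y} -> count P s <= 1.
Proof.
elim: s => //= x s IH /andP[xs us] H.
case Px: (P x) => /=.
  suff -> : count P s = 0 by [].
  apply/eqP; rewrite -leqn0 leqNgt -has_count; apply/hasPn => y ys.
  apply/negP => Py; have yin : y \in x :: s by rewrite inE ys orbT.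
  have := H x y (mem_head _ _) yin Px Py.
  by move=> exy; rewrite exy ys in xs.
apply: IH => // y z ys zs; apply: H; by rewrite inE ?ys ?zs orbT.
Qed.

Lemma count_split (T : eqType) (a1 a2 : pred T) (s : seq T) :
  count a2 s <= count a1 s + count (fun x => a2 x && ~~ a1 x) s.
Proof.
elim: s => //= x s IH; case: (a1 x); case: (a2 x) => /=; lia.
Qed.

Lemma suffix_same u s1 s2 :
  suffix s1 u -> suffix s2 u -> size s1 <= size s2 -> suffix s1 s2.
Proof.
move=> h1 h2 hs; have hu := size_suffix h2.
move: h1 h2; rewrite !suffixE => /eqP <- /eqP <-.
rewrite drop_drop size_drop; apply/eqP; congr drop; rewrite size_drop; lia.
Qed.

Lemma suffix_eqsize s1 s2 : suffix s1 s2 -> size s1 = size s2 -> s1 = s2.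
Proof. by rewrite suffixE => /eqP h e; rewrite e subnn drop0 in h. Qed.

Lemma new_suffix s t a :
  infix s (rcons t a) -> ~~ infix s t -> suffix s (rcons t a).
Proof. by rewrite infix_rconsl => /orP[//|->]. Qed.

Definition K t S v := count (fun c => infix (c :: v) t) S.

Lemma K_step t a S v : uniq S -> K (rcons t a) S v <= K t S v + 1.
Proof.
move=> uS; rewrite /K.
apply: leq_trans (count_split (fun c => infix (c :: v) t) _ _) _.
rewrite leq_add2l; apply: count_le1 => // c1 c2 _ _ /andP[h1 n1] /andP[h2 n2].
have s1 := new_suffix h1 n1; have s2 := new_suffix h2 n2.
have e : c1 :: v = c2 :: v.
  by apply: suffix_eqsize => //; apply: suffix_same s1 s2 _.
by case: e.
Qed.

Lemma g_facts t a S v : uniq S -> (K t S v).-1 < (K (rcons t a) S v).-1 ->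
  infix v t /\ exists c, suffix (c :: v) (rcons t a) /\ ~~ infix (c :: v) t.
Proof.
move=> uS; rewrite -!subn1 => hlt; have hst := K_step t a v uS; split.
  have : 0 < K t S v by lia.
  rewrite /K -has_count => /hasP[c _ hc]; exact: consl_infix hc.
have hlt' : K t S v < K (rcons t a) S v by lia.
have := count_split (fun c => infix (c :: v) t) (fun c => infix (c :: v) (rcons t a)) S.
rewrite -/(K _ _ _) -/(K _ _ _) => hc.
have : 0 < count (fun x => infix (x :: v) (rcons t a) && ~~ infix (x :: v) t) S by lia.
rewrite -has_count => /hasP[c _ /andP[h n]].
exists c; split => //; exact: new_suffix.
Qed.

Lemma g_uniq_aux t a v1 v2 :
  infix v1 t -> (exists c, suffix (c :: v1) (rcons t a) /\ ~~ infix (c :: v1) t) ->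
  infix v2 t -> (exists c, suffix (c :: v2) (rcons t a) /\ ~~ infix (c :: v2) t) ->
  size v1 <= size v2 -> v1 = v2.
Proof.
move=> i1 [c1 [s1 n1]] i2 [c2 [s2 n2]] hs.
have sv1 : suffix v1 (rcons t a) := suffix_trans (suffix_cons _ _) s1.
have sv2 : suffix v2 (rcons t a) := suffix_trans (suffix_cons _ _) s2.
case: (ltnP (size v1) (size v2)) => h.
  have : suffix (c1 :: v1) v2 by apply: suffix_same s1 sv2 _.
  move=> hs12; have := suffix_infix_trans hs12 i2; by rewrite (negbTE n1).
apply: suffix_eqsize; [apply: suffix_same sv1 sv2 hs | lia].
Qed.

Definition F t S U := sumn [seq (K t S v).-1 | v <- U].

Lemma sum_step (f f' : seq A -> nat) (g : pred (seq A)) U :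
  (forall v, f' v <= f v + g v) ->
  sumn [seq f' v | v <- U] <= sumn [seq f v | v <- U] + count g U.
Proof.
move=> H; elim: U => //= v U IH; have := H v; lia.
Qed.

Lemma F_bound t S U : uniq S -> uniq U -> F t S U <= size t.
Proof.
move=> uS uU; elim/last_ind: t => [|t a IH].
  have K0 : forall v, K [::] S v = 0.
    by move=> v; rewrite /K; elim: S {uS} => //= c S ->.
  by rewrite /F; elim: U {uU} => //= v U IH; rewrite K0.
rewrite size_rcons /F.
have hp : forall v, (K (rcons t a) S v).-1 <= (K t S v).-1 + ((K t S v).-1 < (K (rcons t a) S v).-1).
  move=> v; have := K_step t a v uS.
  rewrite -!subn1; case: ltnP => /=; lia.
have hsum := @sum_step (fun v => (K t S v).-1) (fun v => (K (rcons t a) S v).-1) (fun v => (K t S v).-1 < (K (rcons t a) S v).-1) U hp.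
have : count (fun v => (K t S v).-1 < (K (rcons t a) S v).-1) U <= 1.
  apply: count_le1 => // v1 v2 _ _ h1 h2.
  have [i1 e1] := g_facts uS h1; have [i2 e2] := g_facts uS h2.
  case: (leqP (size v1) (size v2)) => hs.
    exact: g_uniq_aux i1 e1 i2 e2 hs.
  symmetry; apply: g_uniq_aux i2 e2 i1 e1 _; lia.
rewrite /F in IH; lia.
Qed.

End Aux.

Theorem proposition5 :
  exists C : nat, forall (A : eqType) (t : seq A),
    has_terminator t ->
    num_unique_wlinks t (up_log 2 (size t)) * up_log 2 (size t) <= C * size t.
Proof.
exists 1 => A t _; rewrite mul1n.
set d := up_log 2 (size t).
apply: leq_trans (F_bound t (undup_uniq t) (undup_uniq _ : uniq (substrs t))).
rewrite /num_unique_wlinks /F.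
elim: (substrs t) => //= v U IH.
rewrite count_cat count_map mulnDl.
rewrite (_ : count (preim _ _) _ = count (fun c => unique_wlink t d v c) (undup t)) //.
apply: leq_add => //.
have hc : count (fun c => unique_wlink t d v c) (undup t) <= 1.
  apply: count_le1 => [|c1 c2 _ c2in]; first exact: undup_uniq.
  move=> /and4P[_ _ _ /allP al] /and4P[_ _ hv _].
  by have /implyP/(_ hv)/eqP := al c2 c2in.
case: (posnP (count (fun c => unique_wlink t d v c) (undup t))) => [-> //|hp].
have : has (fun c => unique_wlink t d v c) (undup t) by rewrite has_count.
move=> /hasP[c _ /and4P[_ hn _ _]].
have : n_wlinks t v <= K t (undup t) v.
  by apply: sub_count => x /andP[].
move: hn hc hp; rewrite -subn1; move: (count _ _) => k h1 h2 h3 h4; have -> : k = 1 by lia. lia.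
Qed.
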